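(* Let $\lambda>0$, $\mu>0$ and $0<b<a<1$, and define $$g(\lambda)=\frac{\frac{\mu}{\lambda+\mu}+\frac{a\mu}{\lambda+a\mu}+\frac{b\mu}{\lambda+b\mu}+0\cdot\frac{2}{\lambda}}{\frac{1}{\lambda+\mu}+\frac{1}{\lambda+a\mu}+\frac{1}{\lambda+b\mu}+\frac{2}{\lambda}}.$$ If $g(\lambda)>\lambda$ (the stability condition of the 4-phase model), then $g(\lambda)<b\mu$.
   Context: Here $g(\lambda)$ is the long-run average service rate (for large queue length) of the following 4-phase vacation queue: a continuous-time Markov chain on states $(n,i)$, $n\ge 0$, $i\in\{1,2,3,4\}$, with $n$ the number of customers and $i$ the server phase; for $n\ge1$ and $i\in\{1,2,3\}$, $(n,i)\to(n-1,i+1)$ at rate $\mu_i$ (where $\mu_1=\mu,\mu_2=a\mu,\mu_3=b\mu$) and $(n,i)\to(n+1,i+1)$ at rate $\lambda$; $(0,i)\to(1,i+1)$ at rate $\lambda$ for $i\in\{1,2,3\}$; and $(n,4)\to(n+2,1)$ at rate $\lambda/2$. The conclusion means this model's average service rate is below that of an $M/M/1$ queue with service rate $b\mu$. *)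

(* Defs.v *)
From mathcomp Require Import all_boot all_order all_algebra.
Set Implicit Arguments. Unset Strict Implicit. Unset Printing Implicit Defensive.
Import Order.TTheory GRing.Theory Num.Theory.
Local Open Scope ring_scope.

Definition g (R : realFieldType) (mu a b lambda : R) : R :=
  (mu / (lambda + mu) + (a * mu) / (lambda + a * mu)
     + (b * mu) / (lambda + b * mu) + 0 * (2 / lambda))
  / (1 / (lambda + mu) + 1 / (lambda + a * mu) + 1 / (lambda + b * mu)
     + 2 / lambda).

(* Main.v *)
Require Import Defs.
From mathcomp Require Import all_boot all_order all_algebra.
From mathcomp Require Import ring lra.
Import Order.TTheory GRing.Theory Num.Theory.
Local Open Scope ring_scope.

Theorem theorem2 (R : realFieldType) (lambda mu a b : R) :
  0 < lambda -> 0 < mu -> 0 < b -> b < a -> a < 1 ->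
  g mu a b lambda > lambda -> g mu a b lambda < b * mu.
Proof.
move=> hl hm hb hba ha1; rewrite /g.
have ha : 0 < a by lra.
have hp : 0 < lambda + mu by lra.
have hq : 0 < lambda + a * mu by have := mulr_gt0 ha hm; lra.
have hr : 0 < lambda + b * mu by have := mulr_gt0 hb hm; lra.
set u := 1 / (lambda + mu). set v := 1 / (lambda + a * mu).
set w := 1 / (lambda + b * mu). set z := 2 / lambda.
have hu : lambda * u + mu * u = 1 by rewrite /u; field; lra.
have hv : lambda * v + a * mu * v = 1 by rewrite /v; field; lra.
have hw : lambda * w + b * mu * w = 1 by rewrite /w; field; lra.
have hz : lambda * z = 2 by rewrite /z; field; lra.
have u0 : 0 < u by rewrite /u divr_gt0.
have v0 : 0 < v by rewrite /v divr_gt0.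
have w0 : 0 < w by rewrite /w divr_gt0.
have z0 : 0 < z by rewrite /z divr_gt0.
have -> : mu / (lambda + mu) = mu * u by rewrite /u; field; lra.
have -> : a * mu / (lambda + a * mu) = a * mu * v by rewrite /v; field; lra.
have -> : b * mu / (lambda + b * mu) = b * mu * w by rewrite /w; field; lra.
have hD : 0 < u + v + w + z by lra.
rewrite ltr_pdivlMr // ltr_pdivrMr //.
rewrite mul0r addr0 => H.
have E : lambda * (u + v + w + z) = lambda * u + lambda * v + lambda * w + lambda * z by ring.
rewrite E hz in H.
have H2 : 2 * (lambda * u + lambda * v + lambda * w) < 1 by lra.
have hbm : lambda < b * mu.
  have lu : 0 < lambda * u by apply: mulr_gt0.
  have lv : 0 < lambda * v by apply: mulr_gt0.
  have : lambda * w < b * mu * w by lra.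
  by rewrite ltr_pM2r.
have hbz : 2 < b * mu * z.
  have : lambda * z < b * mu * z by rewrite ltr_pM2r.
  lra.
have p1 : 0 < (lambda + b * mu) * u by apply: mulr_gt0; lra.
have p2 : 0 < (lambda + b * mu) * v by apply: mulr_gt0; lra.
have E2 : b * mu * (u + v + w + z) = b * mu * u + b * mu * v + b * mu * w + b * mu * z by ring.
have E3 : (lambda + b * mu) * u = lambda * u + b * mu * u by ring.
have E4 : (lambda + b * mu) * v = lambda * v + b * mu * v by ring.
rewrite E2; lra.
Qed.
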